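(* Let $q\geq 3$ be an odd integer. Then the group $G_{1,q}=\langle a,b,s,t\mid [a,b],\ s^{-1}a^qs=ab,\ t^{-1}a^qt=ab^{-1}\rangle$ is not Hopfian.
   Context: A group is Hopfian if every surjective endomorphism of it is injective. *)

(* Defs.v *)
(* Concrete construction of the finitely presented group
   G_{1,q} = < a,b,s,t | [a,b], s^-1 a^q s = ab, t^-1 a^q t = ab^-1 >
   as (free-group words on a,b,s,t) modulo the congruence generated by
   free reduction and the relators; the group elements are the
   equivalence classes (sets of words), multiplication is concatenation
   of chosen representatives. *)
From Stdlib Require Import List Arith Relations ClassicalEpsilon.
Import ListNotations.

Inductive gen : Type := ga | gb | gs | gt.

(* a letter is a generator together with an exponent sign:
   (x, true) = x, (x, false) = x^-1 *)
Definition letter := (gen * bool)%type.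
Definition word := list letter.

Definition linv (l : letter) : letter := (fst l, negb (snd l)).
Definition winv (w : word) : word := rev (map linv w).

Definition A : word := [(ga, true)].
Definition Ai : word := [(ga, false)].
Definition B : word := [(gb, true)].
Definition Bi : word := [(gb, false)].
Definition Sg : word := [(gs, true)].
Definition Sgi : word := [(gs, false)].
Definition Tg : word := [(gt, true)].
Definition Tgi : word := [(gt, false)].

Fixpoint wpow (w : word) (n : nat) : word :=
  match n with 0 => [] | Datatypes.S m => w ++ wpow w m end.

Definition rel_comm : word := Ai ++ Bi ++ A ++ B.
Definition rel_s (q : nat) : word := Sgi ++ wpow A q ++ Sg ++ winv (A ++ B).
Definition rel_t (q : nat) : word := Tgi ++ wpow A q ++ Tg ++ winv (A ++ Bi).

Definition is_relator (q : nat) (r : word) : Prop :=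
  r = rel_comm \/ r = rel_s q \/ r = rel_t q.

Inductive step (q : nat) : word -> word -> Prop :=
  | step_free : forall u v l, step q (u ++ l :: linv l :: v) (u ++ v)
  | step_rel : forall u v r, is_relator q r -> step q (u ++ r ++ v) (u ++ v).

Definition eqv (q : nat) : relation word := clos_refl_sym_trans word (step q).

Definition G1 (q : nat) : Type := { P : word -> Prop | exists w, P = eqv q w }.

Definition cls (q : nat) (w : word) : G1 q := exist _ (eqv q w) (ex_intro _ w eq_refl).

Definition rep (q : nat) (x : G1 q) : word :=
  proj1_sig (constructive_indefinite_description _ (proj2_sig x)).

Definition gmul (q : nat) (x y : G1 q) : G1 q := cls q (rep q x ++ rep q y).

(* A group G is Hopfian if every surjective endomorphism is injective.
   (For a map between groups, preserving multiplication is equivalent to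
   being a homomorphism.) *)
Definition Hopfian (G : Type) (mul : G -> G -> G) : Prop :=
  forall f : G -> G,
    (forall x y, f (mul x y) = mul (f x) (f y)) ->
    (forall y, exists x, f x = y) ->
    (forall x y, f x = f y -> x = y).

(* Main.v *)
From Stdlib Require Import Reals Lra ZArith List Relations Setoid Morphisms Lia ClassicalEpsilon.
From Stdlib Require Import FunctionalExtensionality PropExtensionality ProofIrrelevance.
Require Import Defs.
From Stdlib Require Import Arith.
Import ListNotations.

#[export] Instance eqv_Equiv (q:nat) : Equivalence (eqv q).
Proof.
  split.
  - intro x; apply rst_refl.
  - intros x y H; apply rst_sym, H.
  - intros x y z H1 H2; eapply rst_trans; eauto.
Qed.

Ltac lst := repeat (rewrite <- app_assoc || rewrite <- app_comm_cons); simpl; try reflexivity.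

Lemma step_ctx q u v p s : step q u v -> step q (p ++ u ++ s) (p ++ v ++ s).
Proof.
  intros H; destruct H as [u0 v0 l | u0 v0 r Hr].
  - replace (p ++ (u0 ++ l :: linv l :: v0) ++ s) with ((p ++ u0) ++ l :: linv l :: (v0 ++ s)) by lst.
    replace (p ++ (u0 ++ v0) ++ s) with ((p ++ u0) ++ (v0 ++ s)) by lst.
    constructor.
  - replace (p ++ (u0 ++ r ++ v0) ++ s) with ((p ++ u0) ++ r ++ (v0 ++ s)) by lst.
    replace (p ++ (u0 ++ v0) ++ s) with ((p ++ u0) ++ (v0 ++ s)) by lst.
    constructor; auto.
Qed.

Lemma eqv_ctx q u v p s : eqv q u v -> eqv q (p ++ u ++ s) (p ++ v ++ s).
Proof.
  intros H; induction H.
  - apply rst_step, step_ctx; auto.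
  - reflexivity.
  - symmetry; auto.
  - etransitivity; eauto.
Qed.

#[export] Instance app_proper q : Proper (eqv q ==> eqv q ==> eqv q) (@app letter).
Proof.
  intros u u' Hu v v' Hv.
  transitivity (u' ++ v).
  - exact (eqv_ctx q u u' [] v Hu).
  - pose proof (eqv_ctx q v v' u' [] Hv) as H. rewrite !app_nil_r in H. exact H.
Qed.

#[export] Instance cons_proper q l : Proper (eqv q ==> eqv q) (cons l).
Proof.
  intros u v H. change (l :: u) with ([l] ++ u). change (l :: v) with ([l] ++ v).
  rewrite H; reflexivity.
Qed.

Lemma linv_linv l : linv (linv l) = l.
Proof. destruct l as [g []]; reflexivity. Qed.

Lemma eqv_free q l : eqv q [l; linv l] [].
Proof. apply rst_step. exact (step_free q [] [] l). Qed.

Lemma eqv_free' q l : eqv q [linv l; l] [].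
Proof. pose proof (eqv_free q (linv l)) as H. rewrite linv_linv in H. exact H. Qed.

Lemma eqv_rel q r : is_relator q r -> eqv q r [].
Proof.
  intros H. pose proof (step_rel q [] [] r H) as H0. rewrite app_nil_r in H0.
  apply rst_step; exact H0.
Qed.

Lemma winv_app u v : winv (u ++ v) = winv v ++ winv u.
Proof. unfold winv. rewrite map_app, rev_app_distr. reflexivity. Qed.

Lemma winv_cons l u : winv (l :: u) = winv u ++ [linv l].
Proof. reflexivity. Qed.

Lemma winv_winv u : winv (winv u) = u.
Proof.
  induction u as [|l u IH]; [reflexivity|].
  rewrite winv_cons, winv_app, IH. simpl. rewrite linv_linv. reflexivity.
Qed.

Lemma cancel q u : eqv q (u ++ winv u) [].
Proof.
  induction u as [|l u IH]; [reflexivity|].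
  rewrite winv_cons. simpl. rewrite app_assoc, IH. simpl. apply eqv_free.
Qed.

Lemma cancel' q u : eqv q (winv u ++ u) [].
Proof. pose proof (cancel q (winv u)) as H. rewrite winv_winv in H. exact H. Qed.

Lemma eqv_of_cancel q u v : eqv q (u ++ winv v) [] -> eqv q u v.
Proof.
  intros H. transitivity (u ++ (winv v ++ v)).
  - rewrite cancel', app_nil_r. reflexivity.
  - rewrite app_assoc, H. reflexivity.
Qed.

Lemma eqv_of_cancel_l q u v : eqv q (winv v ++ u) [] -> eqv q u v.
Proof.
  intros H. transitivity ((v ++ winv v) ++ u).
  - rewrite cancel. reflexivity.
  - rewrite <- app_assoc, H, app_nil_r. reflexivity.
Qed.

Lemma cancel_of_eqv q u v : eqv q u v -> eqv q (u ++ winv v) [].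
Proof. intros H. rewrite H. apply cancel. Qed.

#[export] Instance winv_proper q : Proper (eqv q ==> eqv q) winv.
Proof.
  intros u v H.
  transitivity (winv u ++ (v ++ winv v)).
  - rewrite cancel, app_nil_r. reflexivity.
  - rewrite app_assoc. rewrite <- H at 1. rewrite cancel'. reflexivity.
Qed.

Lemma wpow_add w n k : wpow w (n + k) = wpow w n ++ wpow w k.
Proof. induction n; simpl; [reflexivity|]. rewrite IHn, app_assoc. reflexivity. Qed.

Lemma wpow_double w m : wpow w (m + m) = wpow (w ++ w) m.
Proof.
  induction m; [reflexivity|].
  rewrite Nat.add_succ_r. simpl. rewrite IHm, app_assoc. reflexivity.
Qed.

#[export] Instance wpow_proper q : Proper (eqv q ==> eq ==> eqv q) wpow.
Proof.
  intros u v H n n' <-. induction n; simpl; [reflexivity|]. rewrite IHn, H. reflexivity.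
Qed.

Lemma wpow_comm u n : wpow u n ++ u = u ++ wpow u n.
Proof. induction n; simpl; [rewrite app_nil_r; reflexivity|]. rewrite <- app_assoc, IHn. reflexivity. Qed.

Lemma winv_wpow w n : winv (wpow w n) = wpow (winv w) n.
Proof.
  induction n; [reflexivity|]. simpl. rewrite winv_app, IHn, wpow_comm. reflexivity.
Qed.

Definition comm q x y := eqv q (x ++ y) (y ++ x).

Lemma comm_pow q x y n : comm q x y -> comm q (wpow x n) y.
Proof.
  unfold comm. intros H. induction n; simpl.
  - rewrite app_nil_r; reflexivity.
  - rewrite <- app_assoc, IHn, app_assoc, H, <- app_assoc. reflexivity.
Qed.

Lemma pow_mul q x y n : comm q x y -> eqv q (wpow (x ++ y) n) (wpow x n ++ wpow y n).
Proof.
  intros H.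
  induction n; simpl; [reflexivity|].
  pose proof (comm_pow q x y n H) as H1. unfold comm in H1.
  rewrite IHn. rewrite <- !app_assoc. rewrite (app_assoc y (wpow x n)).
  rewrite <- H1. rewrite <- !app_assoc. reflexivity.
Qed.

Lemma comm_inv q x y : comm q x y -> comm q x (winv y).
Proof.
  unfold comm; intros H.
  transitivity (winv y ++ (y ++ x) ++ winv y).
  - rewrite (app_assoc (winv y) (y ++ x)), app_assoc, cancel'. reflexivity.
  - rewrite <- H. rewrite <- !app_assoc, cancel, app_nil_r. reflexivity.
Qed.

Lemma conj_pow q g x n : eqv q (winv g ++ wpow x n ++ g) (wpow (winv g ++ x ++ g) n).
Proof.
  induction n; simpl.
  - apply cancel'.
  - rewrite <- IHn.
    transitivity (winv g ++ x ++ (g ++ winv g) ++ wpow x n ++ g).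
    + rewrite cancel. simpl. rewrite <- app_assoc. reflexivity.
    + lst.
Qed.

Lemma H_ab q : comm q A B.
Proof.
  unfold comm. apply eqv_of_cancel_l.
  change (winv (B ++ A) ++ A ++ B) with rel_comm.
  apply eqv_rel. left; reflexivity.
Qed.

Lemma H_s q : eqv q (Sgi ++ wpow A q ++ Sg) (A ++ B).
Proof.
  apply eqv_of_cancel. rewrite <- !app_assoc.
  apply eqv_rel. right; left; reflexivity.
Qed.

Lemma H_t q : eqv q (Tgi ++ wpow A q ++ Tg) (A ++ Bi).
Proof.
  apply eqv_of_cancel. rewrite <- !app_assoc.
  apply eqv_rel. right; right; reflexivity.
Qed.

Definition img (q:nat) (l:letter) : word :=
  match l with
  | (ga, true) => wpow A q | (ga, false) => wpow Ai q
  | (gb, true) => wpow B q | (gb, false) => wpow Bi q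
  | (g, e) => [(g, e)] end.

Definition sub q (w : word) : word := flat_map (img q) w.

Lemma sub_app q u v : sub q (u ++ v) = sub q u ++ sub q v.
Proof. unfold sub; apply flat_map_app. Qed.

Lemma sub_cons q l u : sub q (l :: u) = img q l ++ sub q u.
Proof. reflexivity. Qed.

Lemma img_linv q l : img q (linv l) = winv (img q l).
Proof. destruct l as [[] []]; simpl; try reflexivity; rewrite winv_wpow; reflexivity. Qed.

Lemma sub_winv q u : sub q (winv u) = winv (sub q u).
Proof.
  induction u as [|l u IH]; [reflexivity|].
  rewrite winv_cons, sub_app, IH, !sub_cons, winv_app. change (sub q []) with (@nil letter).
  rewrite img_linv, app_nil_r. reflexivity.
Qed.

Lemma sub_wpow q w n : sub q (wpow w n) = wpow (sub q w) n.
Proof. induction n; [reflexivity|]. simpl. rewrite sub_app, IHn. reflexivity. Qed.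

Lemma sub_A q : sub q A = wpow A q.
Proof. unfold sub; simpl; apply app_nil_r. Qed.
Lemma sub_B q : sub q B = wpow B q.
Proof. unfold sub; simpl; apply app_nil_r. Qed.
Lemma sub_Bi q : sub q Bi = wpow Bi q.
Proof. unfold sub; simpl; apply app_nil_r. Qed.

Lemma comm_sym q x y : comm q x y -> comm q y x.
Proof. unfold comm; intros; symmetry; auto. Qed.

Lemma sub_rel q r : is_relator q r -> eqv q (sub q r) [].
Proof.
  intros [-> | [-> | ->]].
  - unfold rel_comm. rewrite !sub_app, sub_A, sub_B.
    change (sub q Ai) with (sub q (winv A)). change (sub q Bi) with (sub q (winv B)).
    rewrite !sub_winv, sub_A, sub_B, app_assoc, <- winv_app.
    pose proof (H_ab q) as H. apply (comm_pow _ _ _ q) in H. apply comm_sym in H.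
    apply (comm_pow _ _ _ q) in H. apply comm_sym in H. unfold comm in H.
    rewrite H. apply cancel'.
  - unfold rel_s. rewrite !sub_app, sub_winv, sub_app, sub_A, sub_B, sub_wpow, sub_A.
    rewrite !app_assoc, <- (app_assoc _ _ (sub q Sg)).
    apply cancel_of_eqv.
    change (sub q Sgi) with Sgi. change (sub q Sg) with Sg. change Sgi with (winv Sg).
    rewrite conj_pow. change (winv Sg) with Sgi. rewrite H_s.
    apply pow_mul, H_ab.
  - unfold rel_t. rewrite !sub_app, sub_winv, sub_app, sub_A, sub_Bi, sub_wpow, sub_A.
    rewrite !app_assoc, <- (app_assoc _ _ (sub q Tg)).
    apply cancel_of_eqv.
    change (sub q Tgi) with Tgi. change (sub q Tg) with Tg. change Tgi with (winv Tg).
    rewrite conj_pow. change (winv Tg) with Tgi. rewrite H_t.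
    apply pow_mul. change Bi with (winv B). apply comm_inv, H_ab.
Qed.

Lemma sub_step q u v : step q u v -> eqv q (sub q u) (sub q v).
Proof.
  intros [u0 v0 l | u0 v0 r Hr].
  - rewrite !sub_app, !sub_cons, img_linv.
    rewrite (app_assoc (img q l)), cancel. reflexivity.
  - rewrite !sub_app, (sub_rel q r Hr). reflexivity.
Qed.

#[export] Instance sub_proper q : Proper (eqv q ==> eqv q) (sub q).
Proof.
  intros u v H; induction H.
  - apply sub_step; auto.
  - reflexivity.
  - symmetry; auto.
  - etransitivity; eauto.
Qed.

Definition fl (y:R) : Z := (up y - 1)%Z.

Lemma fl_spec y : (IZR (fl y) <= y < IZR (fl y) + 1)%R.
Proof. unfold fl; rewrite minus_IZR; destruct (archimed y); simpl; lra. Qed.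

Lemma fl_unique y z : (IZR z <= y < IZR z + 1)%R -> fl y = z.
Proof.
  intros [H1 H2]; unfold fl.
  rewrite <- (tech_up y (z+1)); [lia| rewrite plus_IZR; simpl; lra | rewrite plus_IZR; simpl; lra].
Qed.

Definition sig0 (r:R) : R :=
  if Rlt_dec r 1 then (r + 1)%R else if Rlt_dec r 2 then (r - 1)%R else r.

Definition Sfun (Q x:R) : R :=
  let k := IZR (fl (x / Q)) in (Q * k + sig0 (x - Q * k))%R.

Lemma sig0_range Q r : (3 <= Q)%R -> (0 <= r < Q)%R -> (0 <= sig0 r < Q)%R.
Proof. intros. unfold sig0; destruct Rlt_dec; [|destruct Rlt_dec]; lra. Qed.

Lemma sig0_inv r : (0 <= r)%R -> sig0 (sig0 r) = r.
Proof.
  intros. unfold sig0 at 2; destruct (Rlt_dec r 1); [|destruct (Rlt_dec r 2)];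
  unfold sig0; repeat destruct Rlt_dec; lra.
Qed.

Lemma Sfun_eq Q x z r : (0 < Q)%R -> (0 <= r < Q)%R -> x = (Q * IZR z + r)%R ->
  Sfun Q x = (Q * IZR z + sig0 r)%R.
Proof.
  intros HQ Hr Hx. unfold Sfun.
  assert (E : fl (x / Q) = z).
  { apply fl_unique. subst x.
    replace ((Q * IZR z + r) / Q)%R with (IZR z + r / Q)%R by (field; lra).
    assert (0 <= r / Q < 1)%R.
    { split. unfold Rdiv; apply Rmult_le_pos; [lra| left; apply Rinv_0_lt_compat; lra].
      apply (Rmult_lt_reg_r Q); [lra|]. unfold Rdiv. rewrite Rmult_assoc, Rinv_l; lra. }
    lra. }
  rewrite E. f_equal. f_equal. lra.
Qed.

Lemma Sfun_decomp Q x : (0 < Q)%R -> exists z r, (0 <= r < Q)%R /\ x = (Q * IZR z + r)%R.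
Proof.
  intros HQ. exists (fl (x / Q)), (x - Q * IZR (fl (x / Q)))%R.
  destruct (fl_spec (x / Q)) as [H1 H2]. split; [|ring].
  split.
  - apply (Rmult_le_compat_l Q) in H1; [|lra].
    replace (Q * (x / Q))%R with x in H1 by (field; lra). lra.
  - apply (Rmult_lt_compat_l Q) in H2; [|lra].
    replace (Q * (x / Q))%R with x in H2 by (field; lra). lra.
Qed.

Lemma Sfun_inv Q x : (3 <= Q)%R -> Sfun Q (Sfun Q x) = x.
Proof.
  intros HQ. destruct (Sfun_decomp Q x) as (z & r & Hr & Hx); [lra|].
  rewrite (Sfun_eq Q x z r) by (auto; lra).
  rewrite (Sfun_eq Q _ z (sig0 r)); [| lra | apply sig0_range; auto | reflexivity].
  rewrite sig0_inv by lra. lra.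
Qed.

Lemma Sfun_shift Q x : (3 <= Q)%R -> Sfun Q (x + Q) = (Sfun Q x + Q)%R.
Proof.
  intros HQ. destruct (Sfun_decomp Q x) as (z & r & Hr & Hx); [lra|].
  rewrite (Sfun_eq Q x z r) by (auto; lra).
  rewrite (Sfun_eq Q _ (z+1) r); [| lra | auto | rewrite plus_IZR; simpl; lra].
  rewrite plus_IZR; simpl; ring.
Qed.

Lemma Sfun_small Q y : (3 <= Q)%R -> (0 <= y < Q)%R -> Sfun Q y = sig0 y.
Proof.
  intros. rewrite (Sfun_eq Q y 0 y); [simpl; ring | lra | lra | simpl; ring].
Qed.

Definition fact (q:nat) (l:letter) (x:R) : R :=
  let Q := INR q in
  match l with
  | (ga, true) => (x + 1)%R | (ga, false) => (x - 1)%R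
  | (gb, true) => (x + (Q - 1))%R | (gb, false) => (x - (Q - 1))%R
  | (gs, _) => Sfun Q x
  | (gt, true) => (- (Q / (Q - 2)) * x)%R | (gt, false) => (- ((Q - 2) / Q) * x)%R
  end.

Definition act q (w:word) (x:R) : R := fold_right (fact q) x w.

Lemma act_app q u v x : act q (u ++ v) x = act q u (act q v x).
Proof. unfold act; apply fold_right_app. Qed.

Lemma act_wpowA q n x : act q (wpow A n) x = (x + INR n)%R.
Proof.
  induction n; simpl; [ring|]. 
  change (fold_right (fact q) x (wpow A n)) with (act q (wpow A n) x).
  rewrite IHn. destruct n; simpl; ring.
Qed.

Lemma fact_inv q l x : 3 <= q -> fact q l (fact q (linv l) x) = x.
Proof.
  intros Hq. assert (HQ : (3 <= INR q)%R) by (apply le_INR in Hq; simpl in Hq; lra).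
  destruct l as [[] []]; simpl; try ring; try (apply Sfun_inv; lra); field; lra.
Qed.

Lemma act_rel q r x : 3 <= q -> is_relator q r -> act q r x = x.
Proof.
  intros Hq Hr. assert (HQ : (3 <= INR q)%R) by (apply le_INR in Hq; simpl in Hq; lra).
  destruct Hr as [-> | [-> | ->]].
  - simpl. ring.
  - unfold rel_s. rewrite !act_app, act_wpowA. simpl.
    replace (x - 1 - (INR q - 1))%R with (x - INR q)%R by ring.
    replace (Sfun (INR q) (x - INR q) + INR q)%R with (Sfun (INR q) x).
    + apply Sfun_inv; lra.
    + rewrite <- Sfun_shift by lra. f_equal; ring.
  - unfold rel_t. rewrite !act_app, act_wpowA. simpl. field. lra.
Qed.

Lemma act_step q u v x : 3 <= q -> step q u v -> act q u x = act q v x.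
Proof.
  intros Hq [u0 v0 l | u0 v0 r Hr].
  - rewrite !act_app. simpl. f_equal.
    change (fact q l (fact q (linv l) (act q v0 x)) = act q v0 x).
    apply fact_inv; auto.
  - rewrite !act_app. rewrite (act_rel q r); auto.
Qed.

Lemma act_eqv q u v x : 3 <= q -> eqv q u v -> act q u x = act q v x.
Proof.
  intros Hq H; induction H.
  - apply act_step; auto.
  - reflexivity.
  - symmetry; auto.
  - etransitivity; eauto.
Qed.

Lemma not_eqv q : 3 <= q -> ~ eqv q (Sgi ++ A ++ Sg ++ A) (A ++ Sgi ++ A ++ Sg).
Proof.
  intros Hq H. assert (HQ : (3 <= INR q)%R) by (apply le_INR in Hq; simpl in Hq; lra).
  apply (act_eqv q _ _ (1/2)%R Hq) in H. simpl in H.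
  rewrite (Sfun_small _ (1/2 + 1)) in H by lra.
  rewrite (Sfun_small _ (1/2)) in H by lra.
  assert (E1 : sig0 (1/2) = (1/2+1)%R) by (unfold sig0; repeat destruct Rlt_dec; lra).
  assert (E2 : sig0 (1/2+1) = (1/2)%R) by (unfold sig0; repeat destruct Rlt_dec; lra).
  rewrite E1, E2 in H.
  rewrite (Sfun_small _ (1/2 + 1)) in H by lra.
  rewrite (Sfun_small _ (1/2 + 1 + 1)) in H by lra.
  assert (E3 : sig0 (1/2+1+1) = (1/2+1+1)%R) by (unfold sig0; repeat destruct Rlt_dec; lra).
  rewrite E2, E3 in H. lra.
Qed.

Lemma sig_eq q (x y : G1 q) : proj1_sig x = proj1_sig y -> x = y.
Proof.
  destruct x as [P HP], y as [P' HP']; simpl; intros ->. f_equal. apply proof_irrelevance.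
Qed.

Lemma cls_inj q u v : cls q u = cls q v -> eqv q u v.
Proof.
  intros H. apply (f_equal (@proj1_sig _ _)) in H. simpl in H.
  assert (H0 : eqv q v v) by reflexivity. rewrite <- H in H0. exact H0.
Qed.

Lemma cls_eq q u v : eqv q u v -> cls q u = cls q v.
Proof.
  intros H. apply sig_eq. simpl. extensionality z. apply propositional_extensionality.
  split; intros H0.
  - etransitivity; [symmetry; exact H | exact H0].
  - etransitivity; [exact H | exact H0].
Qed.

Lemma cls_rep q x : cls q (rep q x) = x.
Proof.
  apply sig_eq. destruct x as [P HP]. unfold rep. simpl.
  destruct (constructive_indefinite_description _ HP) as [w Hw]. simpl. symmetry; exact Hw.
Qed.

Lemma rep_cls q w : eqv q (rep q (cls q w)) w.
Proof. apply cls_inj, cls_rep. Qed.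

Lemma gmul_cls q u v : gmul q (cls q u) (cls q v) = cls q (u ++ v).
Proof. unfold gmul. apply cls_eq. rewrite !rep_cls. reflexivity. Qed.

Definition Fm q (x : G1 q) : G1 q := cls q (sub q (rep q x)).

Lemma F_cls q w : Fm q (cls q w) = cls q (sub q w).
Proof. unfold Fm. apply cls_eq. rewrite rep_cls. reflexivity. Qed.

Lemma F_hom q x y : Fm q (gmul q x y) = gmul q (Fm q x) (Fm q y).
Proof.
  rewrite <- (cls_rep q x), <- (cls_rep q y).
  rewrite gmul_cls, !F_cls, gmul_cls, sub_app. reflexivity.
Qed.

Definition P0 : word := Sgi ++ A ++ Sg ++ Tgi ++ A ++ Tg.
Definition pa (m:nat) : word := A ++ wpow (winv P0) m.
Definition pre (m:nat) (l:letter) : word :=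
  match l with
  | (ga, true) => pa m | (ga, false) => winv (pa m)
  | (gb, true) => winv (pa m) ++ Sgi ++ A ++ Sg
  | (gb, false) => winv (winv (pa m) ++ Sgi ++ A ++ Sg)
  | (g, e) => [(g, e)] end.

Lemma sub_P0 q : eqv q (sub q P0) (A ++ A).
Proof.
  unfold P0. rewrite !sub_app, !sub_A.
  change (sub q Sgi) with Sgi. change (sub q Sg) with Sg.
  change (sub q Tgi) with Tgi. change (sub q Tg) with Tg.
  transitivity ((Sgi ++ wpow A q ++ Sg) ++ (Tgi ++ wpow A q ++ Tg)); [lst|].
  rewrite H_s, H_t.
  pose proof (H_ab q) as H. unfold comm in H.
  transitivity (A ++ (B ++ A) ++ Bi); [lst|].
  rewrite <- H.
  transitivity (A ++ A ++ (B ++ winv B)); [lst|].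
  rewrite cancel. lst.
Qed.

Lemma sub_pa q m : q = 2 * m + 1 -> eqv q (sub q (pa m)) A.
Proof.
  intros Hq. unfold pa. rewrite sub_app, sub_A, sub_wpow, sub_winv, sub_P0.
  rewrite <- winv_wpow.
  assert (E : wpow A q = A ++ wpow (A ++ A) m) by (replace q with (S (m + m)) by lia; simpl; rewrite wpow_double; reflexivity). rewrite E.
  rewrite <- app_assoc, cancel, app_nil_r. reflexivity.
Qed.

Lemma pre_ok q m l : q = 2 * m + 1 -> eqv q (sub q (pre m l)) [l].
Proof.
  intros Hq.
  assert (Hb : eqv q (sub q (winv (pa m) ++ Sgi ++ A ++ Sg)) B).
  { rewrite !sub_app, sub_winv, sub_pa, sub_A by auto.
    change (sub q Sgi) with Sgi. change (sub q Sg) with Sg.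
    rewrite H_s. rewrite app_assoc, cancel'. reflexivity. }
  destruct l as [[] []]; simpl pre; try reflexivity.
  - apply sub_pa; auto.
  - rewrite sub_winv, sub_pa by auto. reflexivity.
  - exact Hb.
  - rewrite sub_winv, Hb. reflexivity.
Qed.

Lemma F_surj q : Nat.Odd q -> forall y : G1 q, exists x, Fm q x = y.
Proof.
  intros [m Hm] y. rewrite <- (cls_rep q y).
  exists (cls q (flat_map (pre m) (rep q y))). rewrite F_cls. apply cls_eq.
  induction (rep q y) as [|l w IH]; [reflexivity|].
  simpl. rewrite sub_app, IH, pre_ok by auto. reflexivity.
Qed.

Lemma F_noninj q : Fm q (cls q (Sgi ++ A ++ Sg ++ A)) = Fm q (cls q (A ++ Sgi ++ A ++ Sg)).
Proof.
  rewrite !F_cls. apply cls_eq. rewrite !sub_app, !sub_A.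
  change (sub q Sgi) with Sgi. change (sub q Sg) with Sg.
  assert (Hc : comm q (wpow A q) (A ++ B)).
  { apply comm_pow. unfold comm. rewrite <- app_assoc.
    pose proof (H_ab q) as H. unfold comm in H. rewrite <- H. reflexivity. }
  unfold comm in Hc.
  transitivity ((Sgi ++ wpow A q ++ Sg) ++ wpow A q); [lst|].
  rewrite H_s, <- Hc, <- H_s. lst.
Qed.

Theorem theorem3p1 (q : nat) (hq : 3 <= q) (hodd : Nat.Odd q) :
  ~ Hopfian (G1 q) (gmul q).
Proof.
  intros H.
  pose proof (H (Fm q) (F_hom q) (F_surj q hodd) _ _ (F_noninj q)) as E.
  apply cls_inj in E. exact (not_eqv q hq E).
Qed.
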